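(* Let $H_1^+$, $H_2^+$ be positive half-spaces in $\tilde K_b(\mathcal P,w)$ with minimal vertices $\Delta_1=\min(H_1)$ and $\Delta_2=\min(H_2)$. Then (1) $H_2^+\le H_1^+$ if and only if $\Delta_2\le\Delta_1$; (2) $H_1^+\cap H_2^+\neq\emptyset$ if and only if $\{\Delta_1,\Delta_2\}$ has an upper bound among the vertices of $\tilde K_b(\mathcal P,w)$.
   Context: $\mathcal P=\langle\Sigma\mid\mathcal R\rangle$ is a semigroup presentation (no relations $(u,u)$), $w\in\Sigma^+$. Pictures over $\mathcal P$: a frame, transistors and $\Sigma$-labelled wires, each wire from the bottom of a transistor or top of the frame to the top of a transistor or bottom of the frame, contacts ordered left to right, the relation ''$T_1<T_2$ if a wire runs from the bottom of $T_1$ to the top of $T_2$'' generating a strict partial order, and each transistor's top and bottom words forming a relation of $\mathcal R$. Dipoles: pairs $T_1<T_2$ with bottom contacts of $T_1$ joined in order to top contacts of $T_2$ and top label of $T_1$ equal to bottom label of $T_2$; reduced = dipole-free. $\tilde K_b(\mathcal P,w)$: vertices are reduced $(w,* )$-pictures modulo concatenation on the bottom with transistor-free pictures; $n$-cubes are such pictures with $n$ maximal transistors marked white, with vertices obtained by keeping/deleting (with their bottom wires) the white transistors; it is a CAT(0) cubical complex; base vertex $*$ = picture without transistors. Vertices: $\Delta_1\le\Delta_2$ iff $\Delta_1\circ\theta\cong\Delta_2$ without reduction for some picture $\theta$. Hyperplanes: classes of edges under the transitive closure of ''opposite sides of a square''; $H^+$ is the component of the complement of $H$ not containing $*$; $H_1^+\le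 H_2^+$ iff $H_2^+\subseteq H_1^+$. The minimal vertex $\min(H)$: for an edge of $H$ given by a picture with one white transistor $T$, the picture formed by all transistors $T'\le T$; independent of the edge. *)

(* Defs.v *)
(* Braided pictures (Farley's "pictures") over a
   semigroup presentation, encoded combinatorially, and the CAT(0) cube complex
   K~_b(P,w) described through its vertices, edges, squares and hyperplanes. *)
From Stdlib Require Import Relations.
From mathcomp Require Import all_boot.
Set Implicit Arguments. Unset Strict Implicit. Unset Printing Implicit Defensive.

Section Pictures.
Variable S : Type.
Variable R : seq S -> seq S -> Prop.
Variable w : seq S.

(* A contact: (None, k) = k-th contact of the frame (top frame for sources,
   bottom frame for targets); (Some i, k) = k-th contact of transistor i
   (bottom contact for sources, top contact for targets). *)
Definition contact := (option nat * nat)%type.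

(* A picture: top and bottom frame words, transistors 0..ntr-1 with top and
   bottom labels, and the wiring function (sources -> targets).  Values of
   tlab/blab/wire outside the valid ranges are irrelevant junk. *)
Record picture := Pic {
  topw : seq S; botw : seq S; ntr : nat;
  tlab : nat -> seq S; blab : nat -> seq S;
  wire : contact -> contact }.

Definition src_ok (p : picture) (c : contact) : bool :=
  match c with
  | (None, k) => k < size (topw p)
  | (Some i, k) => (i < ntr p) && (k < size (blab p i)) end.
Definition tgt_ok (p : picture) (c : contact) : bool :=
  match c with
  | (None, k) => k < size (botw p)
  | (Some i, k) => (i < ntr p) && (k < size (tlab p i)) end.
Definition src_lab (p : picture) (c : contact) : option S :=
  match c with (None, k) => onth (topw p) k | (Some i, k) => onth (blab p i) k end.
Definition tgt_lab (p : picture) (c : contact) : option S :=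
  match c with (None, k) => onth (botw p) k | (Some i, k) => onth (tlab p i) k end.

(* T1 -> T2 : a wire runs from the bottom of T1 to the top of T2 *)
Definition tedge (p : picture) (i j : nat) : Prop :=
  i < ntr p /\ j < ntr p /\
  exists k k', src_ok p (Some i, k) /\ wire p (Some i, k) = (Some j, k').
Definition tlt (p : picture) := clos_trans nat (tedge p).
Definition tle (p : picture) (i j : nat) := i = j \/ tlt p i j.

Definition wf (p : picture) : Prop :=
  (forall i, i < ntr p -> R (tlab p i) (blab p i) \/ R (blab p i) (tlab p i)) /\
  (forall c, src_ok p c -> tgt_ok p (wire p c) /\ tgt_lab p (wire p c) = src_lab p c) /\
  (forall c c', src_ok p c -> src_ok p c' -> wire p c = wire p c' -> c = c') /\
  (forall d, tgt_ok p d -> exists c, src_ok p c /\ wire p c = d) /\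
  (forall i, i < ntr p -> ~ tlt p i i).

Definition maximal (p : picture) (i : nat) : Prop :=
  i < ntr p /\ forall j, ~ tedge p i j.

Definition dipole (p : picture) (i j : nat) : Prop :=
  tedge p i j /\ size (blab p i) = size (tlab p j) /\
  (forall k, k < size (blab p i) -> wire p (Some i, k) = (Some j, k)) /\
  tlab p i = blab p j.
Definition reduced (p : picture) : Prop := forall i j, ~ dipole p i j.

Definition mapc (phi : nat -> nat) (c : contact) : contact :=
  match c with (Some j, k) => (Some (phi j), k) | d => d end.

(* q is (isomorphic to) the sub-picture of p formed by the transistors in the
   (downward closed) set Sp, with all wires leaving Sp going to the bottom of
   the frame (in any order, i.e. up to concatenation on the bottom with a
   transistor-free picture); phi identifies transistors of q with those of p. *)
Definition restr_via (p : picture) (Sp : nat -> Prop) (q : picture)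
    (phi : nat -> nat) : Prop :=
  wf q /\ topw q = topw p /\
  (forall j, j < ntr q -> phi j < ntr p /\ Sp (phi j)) /\
  (forall j j', j < ntr q -> j' < ntr q -> phi j = phi j' -> j = j') /\
  (forall i, i < ntr p -> Sp i -> exists j, j < ntr q /\ phi j = i) /\
  (forall j, j < ntr q -> tlab q j = tlab p (phi j) /\ blab q j = blab p (phi j)) /\
  (forall c, src_ok q c ->
     match wire q c with
     | (Some j, k) => wire p (mapc phi c) = (Some (phi j), k)
     | (None, _) => forall i k, wire p (mapc phi c) = (Some i, k) -> ~ Sp i
     end).

(* equality of vertices: isomorphism up to concatenation on the bottom with a
   transistor-free (braided) picture *)
Definition vequiv (p q : picture) : Prop :=
  exists phi, restr_via p (fun _ => True) q phi.

(* concatenation p o th (th glued below p; needs topw th = botw p) *)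
Definition shiftc (n : nat) (c : contact) : contact :=
  match c with (Some j, k) => (Some (j + n), k) | d => d end.
Definition concat (p th : picture) : picture :=
  let through d := match d with
                   | (None, m) => shiftc (ntr p) (wire th (None, m))
                   | d => d end in
  Pic (topw p) (botw th) (ntr p + ntr th)
    (fun i => if i < ntr p then tlab p i else tlab th (i - ntr p))
    (fun i => if i < ntr p then blab p i else blab th (i - ntr p))
    (fun c => match c with
              | (Some i, k) => if i < ntr p then through (wire p c)
                               else shiftc (ntr p) (wire th (Some (i - ntr p), k))
              | (None, k) => through (wire p c) end).

Definition le_v (p q : picture) : Prop :=
  exists th, wf th /\ topw th = botw p /\ vequiv (concat p th) q.

(* vertices of K~_b(P,w): reduced (w, _)-pictures *)
Definition is_vertex (p : picture) : Prop := wf p /\ topw p = w /\ reduced p.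
Definition is_star (p : picture) : Prop := wf p /\ topw p = w /\ ntr p = 0.

(* edges: pictures with one (maximal) white transistor *)
Definition medge := (picture * nat)%type.
Definition is_edge (e : medge) : Prop := is_vertex e.1 /\ maximal e.1 e.2.
(* the other endpoint of the edge: delete the white transistor *)
Definition del (e : medge) (q : picture) : Prop :=
  exists phi, restr_via e.1 (fun i => i <> e.2) q phi.
Definition edge_eq (e e' : medge) : Prop :=
  exists phi, restr_via e.1 (fun _ => True) e'.1 phi /\ phi e'.2 = e.2.
(* opposite sides of a square (the square = e.1 with white e.2 and t2) *)
Definition opp (e e' : medge) : Prop :=
  exists t2, maximal e.1 t2 /\ t2 <> e.2 /\
  exists phi, restr_via e.1 (fun i => i <> t2) e'.1 phi /\ phi e'.2 = e.2.
Definition hrel (e e' : medge) : Prop :=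
  is_edge e /\ is_edge e' /\ (edge_eq e e' \/ opp e e').
(* the hyperplane dual to e, as its set of edges *)
Definition hyperplane (e : medge) : medge -> Prop :=
  fun e' => is_edge e' /\ clos_refl_sym_trans medge hrel e e'.

Definition adj_avoid (H : medge -> Prop) (v v' : picture) : Prop :=
  is_vertex v /\ is_vertex v' /\
  exists e, is_edge e /\ ~ H e /\
   ((vequiv e.1 v /\ del e v') \/ (vequiv e.1 v' /\ del e v)).
(* vertices of the component of the complement of H containing * *)
Definition neg_half (H : medge -> Prop) (v : picture) : Prop :=
  exists s, is_star s /\ clos_refl_trans picture (adj_avoid H) s v.
Definition pos_half (H : medge -> Prop) (v : picture) : Prop :=
  is_vertex v /\ ~ neg_half H v.

(* q represents min(H) for the hyperplane H dual to e *)
Definition is_min (e : medge) (q : picture) : Prop :=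
  exists phi, restr_via e.1 (fun i => tle e.1 i e.2) q phi.

End Pictures.

(* Main.v *)
Require Import Defs.
From Stdlib Require Import Relations Classical ClassicalDescription.
From mathcomp Require Import all_boot zify.
Set Implicit Arguments. Unset Strict Implicit. Unset Printing Implicit Defensive.

Section Proofs.
Variable S : Type.
Variable R : seq S -> seq S -> Prop.
Local Notation pic := (picture S).

Definition pdec (P : Prop) : bool := if excluded_middle_informative P then true else false.
Lemma pdecP (P : Prop) : pdec P <-> P.
Proof. by rewrite /pdec; case: excluded_middle_informative. Qed.

Definition dclosed (p : pic) (D : nat -> Prop) := forall a b, tedge p a b -> D b -> D a.

Lemma mapc_comp f g c : mapc f (mapc g c) = mapc (fun x => f (g x)) c.
Proof. by case: c => [[i|] k]. Qed.
Lemma mapc_idE c : mapc (fun x => x) c = c.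
Proof. by case: c => [[i|] k]. Qed.

Definition finv (f : nat -> nat) n i := index i (map f (iota 0 n)).
Lemma finv_spec f n i : (exists j, j < n /\ f j = i) -> finv f n i < n /\ f (finv f n i) = i.
Proof.
move=> [j [jn <-]].
have Hm : f j \in map f (iota 0 n) by apply: map_f; rewrite mem_iota.
split; first by move: Hm; rewrite -index_mem size_map size_iota.
have := nth_index 0 Hm; rewrite /finv.
have Hl : index (f j) [seq f i | i <- iota 0 n] < n by move: Hm; rewrite -index_mem size_map size_iota.
rewrite (nth_map 0) ?size_iota // nth_iota //.
Qed.
Lemma finvK f n j : (forall a b, a < n -> b < n -> f a = f b -> a = b) -> j < n -> finv f n (f j) = j.
Proof.
move=> Hi jn; have [H1 H2] := @finv_spec f n (f j) (ex_intro _ j (conj jn erefl)).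
by apply: Hi.
Qed.

Section Restr.
Variables (p q : pic) (Sp : nat -> Prop) (phi : nat -> nat).
Hypothesis Hr : restr_via R p Sp q phi.

Lemma rv_wf : wf R q. Proof. by case: Hr. Qed.
Lemma rv_top : topw q = topw p. Proof. by case: Hr => _ []. Qed.
Lemma rv_rng j : j < ntr q -> phi j < ntr p /\ Sp (phi j). Proof. by case: Hr => _ [_ []] H _; apply: H. Qed.
Lemma rv_inj j j' : j < ntr q -> j' < ntr q -> phi j = phi j' -> j = j'.
Proof. by case: Hr => _ [_ [_ []]] H _; apply: H. Qed.
Lemma rv_sur i : i < ntr p -> Sp i -> exists j, j < ntr q /\ phi j = i.
Proof. by case: Hr => _ [_ [_ [_ []]]] H _; apply: H. Qed.
Lemma rv_lab j : j < ntr q -> tlab q j = tlab p (phi j) /\ blab q j = blab p (phi j).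
Proof. by case: Hr => _ [_ [_ [_ [_ []]]]] H _; apply: H. Qed.
Lemma rv_wire c : src_ok q c ->
     match wire q c with
     | (Some j, k) => wire p (mapc phi c) = (Some (phi j), k)
     | (None, _) => forall i k, wire p (mapc phi c) = (Some i, k) -> ~ Sp i
     end.
Proof. by case: Hr => _ [_ [_ [_ [_ [_ H]]]]]; apply: H. Qed.

Lemma rv_src c : src_ok q c -> src_ok p (mapc phi c).
Proof.
case: c => [[j|] k] /=; last by rewrite rv_top.
move=> /andP [jq kq]; have [-> _] := rv_rng jq; by rewrite -(rv_lab jq).2.
Qed.
Lemma rv_srclab c : src_ok q c -> src_lab p (mapc phi c) = src_lab q c.
Proof.
case: c => [[j|] k] /=; last by rewrite rv_top.
by move=> /andP [jq kq]; rewrite (rv_lab jq).2.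
Qed.

Lemma rv_tedge i j : tedge q i j -> tedge p (phi i) (phi j).
Proof.
move=> [iq [jq [k [k' [Hs Hw]]]]].
have [ip _] := rv_rng iq; have [jp _] := rv_rng jq.
split=> //; split=> //; exists k, k'; split; first exact: (rv_src Hs).
by have := rv_wire Hs; rewrite Hw.
Qed.

Lemma rv_tedge_b i j : i < ntr q -> j < ntr q -> tedge p (phi i) (phi j) -> tedge q i j.
Proof.
move=> iq jq [_ [_ [k [k' [Hs Hw]]]]].
have Hsq : src_ok q (Some i, k) by move: Hs => /= /andP [_ Hk]; rewrite iq (rv_lab iq).2.
have := rv_wire Hsq; have [Ht _] := (proj1 (proj2 rv_wf)) _ Hsq.
case E: (wire q (Some i, k)) => [[j''|] k''] /= H.
- move: Ht; rewrite E /= => /andP [j''q _].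
  rewrite Hw in H; case: H => /(rv_inj jq j''q) Hj Hk; subst.
  split=> //; split=> //; exists k, k''; by rewrite E.
- by case: (H _ _ Hw); apply: (rv_rng jq).2.
Qed.

Lemma rv_tlt i j : tlt q i j -> tlt p (phi i) (phi j).
Proof.
elim=> [a b /rv_tedge H| a b c _ H1 _ H2]; first by apply: t_step.
exact: t_trans H1 H2.
Qed.

Lemma rv_tlt_b i j : dclosed p Sp -> i < ntr q -> j < ntr q -> tlt p (phi i) (phi j) -> tlt q i j.
Proof.
move=> Hd iq jq Ht; have H := clos_trans_tn1 _ _ _ _ Ht; clear Ht.
have: forall b, clos_trans_n1 nat (tedge p) (phi i) b -> forall j, j < ntr q -> b = phi j -> tlt q i j.
  clear j jq H.
  move=> b; elim=> [y Hy j jq Ey| y z Hyz Hc IH j jq Ez].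
  - by subst; apply: t_step; apply: rv_tedge_b.
  - subst; have Sy : Sp y by apply: (Hd _ _ Hyz); apply: (rv_rng jq).2.
    have [yp _] := Hyz.
    have [j' [j'q Ej']] := rv_sur yp Sy; subst.
    apply: t_trans (IH _ j'q erefl) _; apply: t_step; exact: rv_tedge_b.
by move=> /(_ _ H j jq erefl).
Qed.

Lemma rv_tle i j : tle q i j -> tle p (phi i) (phi j).
Proof. by case=> [->|H]; [left|right; apply: rv_tlt]. Qed.
Lemma rv_tle_b i j : dclosed p Sp -> i < ntr q -> j < ntr q -> tle p (phi i) (phi j) -> tle q i j.
Proof.
move=> Hd iq jq [E|H]; first by left; apply: rv_inj.
by right; apply: rv_tlt_b.
Qed.

Lemma rv_reduced : reduced p -> reduced q.
Proof.
move=> Hred i j [He [Hsz [Hw Hl]]].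
have [iq [jq _]] := He.
apply: (Hred (phi i) (phi j)); split; first exact: rv_tedge.
rewrite -(rv_lab iq).2 -(rv_lab jq).1 -(rv_lab iq).1 -(rv_lab jq).2; split=> //; split=> // k kb.
have Hs : src_ok q (Some i, k) by rewrite /= iq.
by have := rv_wire Hs; rewrite Hw.
Qed.

Lemma rv_maximal t : t < ntr q -> maximal p (phi t) -> maximal q t.
Proof. by move=> tq [_ H]; split=> // j /rv_tedge /H. Qed.

Lemma rv_dclosed {D : nat -> Prop} : dclosed p D -> dclosed q (fun j => D (phi j)).
Proof. by move=> Hd a b /rv_tedge H; apply: Hd. Qed.

Lemma rv_finv i : i < ntr p -> Sp i -> finv phi (ntr q) i < ntr q /\ phi (finv phi (ntr q) i) = i.
Proof. by move=> ip Si; apply: finv_spec; apply: rv_sur. Qed.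
Lemma rv_finvK j : j < ntr q -> finv phi (ntr q) (phi j) = j.
Proof. by apply: finvK => a b; apply: rv_inj. Qed.

End Restr.

Lemma wf_tgt (p : pic) c : wf R p -> src_ok p c -> tgt_ok p (wire p c).
Proof. by move=> [_ [H _]] /H []. Qed.
Lemma wf_tgtS (p : pic) c j k : wf R p -> src_ok p c -> wire p c = (Some j, k) -> j < ntr p.
Proof. by move=> Hw Hc E; have := wf_tgt Hw Hc; rewrite E /= => /andP []. Qed.

Ltac rvsplit := refine (conj _ (conj _ (conj _ (conj _ (conj _ (conj _ _)))))).

Lemma rv_comp (p q r : pic) S1 S2 phi psi :
  restr_via R p S1 q phi -> restr_via R q S2 r psi ->
  restr_via R p (fun i => exists j, j < ntr q /\ phi j = i /\ S2 j) r (fun k => phi (psi k)).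
Proof.
move=> H1 H2; rvsplit.
- exact: rv_wf H2.
- by rewrite (rv_top H2) (rv_top H1).
- move=> j jr; have [jq Sj] := rv_rng H2 jr; split; first exact: (rv_rng H1 jq).1.
  by exists (psi j).
- move=> a b ar br E; apply: (rv_inj H2 ar br); apply: (rv_inj H1) E.
  + exact: (rv_rng H2 ar).1.
  + exact: (rv_rng H2 br).1.
- move=> i ip [j [jq [<- Sj]]]; have [k [kr Ek]] := rv_sur H2 jq Sj.
  by exists k; rewrite Ek.
- move=> j jr; have jq := (rv_rng H2 jr).1.
  by rewrite (rv_lab H2 jr).1 (rv_lab H2 jr).2 (rv_lab H1 jq).1 (rv_lab H1 jq).2.
- move=> c Hc; have Hq := rv_src H2 Hc.
  have W2 := rv_wire H2 Hc; have W1 := rv_wire H1 Hq.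
  rewrite -mapc_comp.
  case E: (wire r c) W2 => [[j|] k] W2.
  + by rewrite W2 in W1.
  + move=> i k0 Hw [j [jq [Ej Sj]]].
    case E2: (wire q (mapc psi c)) W1 W2 => [[j'|] k'] W1 W2.
    * rewrite W1 in Hw; case: Hw => Ei _.
      have j'q : j' < ntr q by apply: (wf_tgtS (rv_wf H1) Hq E2).
      have Ej' : j' = j by apply: (rv_inj H1 j'q jq); rewrite Ej Ei.
      by subst; apply: (W2 j k').
    * by apply: (W1 _ _ Hw); rewrite -Ej; apply: (rv_rng H1 jq).2.
Qed.

Lemma rv_factor (p q r : pic) S1 S2 phi psi :
  restr_via R p S1 q phi -> restr_via R p S2 r psi ->
  (forall i, i < ntr p -> S2 i -> S1 i) ->
  restr_via R q (fun j => S2 (phi j)) r (fun k => finv phi (ntr q) (psi k)).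
Proof.
move=> H1 H2 Hs.
set ph' := finv phi (ntr q).
have K k : k < ntr r -> ph' (psi k) < ntr q /\ phi (ph' (psi k)) = psi k.
  move=> kr; have [kp Sk] := rv_rng H2 kr; exact: (rv_finv H1 kp (Hs _ kp Sk)).
rvsplit.
- exact: rv_wf H2.
- by rewrite (rv_top H2) (rv_top H1).
- move=> j jr; have [K1 K2] := K j jr; split=> //; rewrite K2; exact: (rv_rng H2 jr).2.
- move=> a b ar br E; apply: (rv_inj H2 ar br).
  by rewrite -(K a ar).2 -(K b br).2 E.
- move=> j jq Sj; have [jp _] := rv_rng H1 jq.
  have [k [kr Ek]] := rv_sur H2 jp Sj; exists k; split=> //.
  by rewrite /ph' Ek (rv_finvK H1 jq).
- move=> j jr; have [K1 K2] := K j jr.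
  by rewrite (rv_lab H2 jr).1 (rv_lab H2 jr).2 (rv_lab H1 K1).1 (rv_lab H1 K1).2 K2.
- move=> c Hc.
  set c1 := mapc (fun k => ph' (psi k)) c.
  have Hc1 : src_ok q c1 /\ mapc phi c1 = mapc psi c.
    case: c Hc @c1 => [[k0|] k] /=; last by rewrite (rv_top H2) (rv_top H1).
    move=> /andP [k0r kb]; have [K1 K2] := K k0 k0r.
    by rewrite K1 K2 (rv_lab H1 K1).2 K2 -(rv_lab H2 k0r).2 kb.
  have [Hq Em] := Hc1.
  have W2 := rv_wire H2 Hc; have W1 := rv_wire H1 Hq.
  rewrite Em in W1.
  case E: (wire r c) W2 => [[j|] k] W2.
  + have jr : j < ntr r by apply: (wf_tgtS (rv_wf H2) Hc E).
    case E1: (wire q c1) W1 => [[j'|] k'] W1.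
    * have j'q : j' < ntr q by apply: (wf_tgtS (rv_wf H1) Hq E1).
      rewrite W2 in W1; case: W1 => Ej Ek; subst.
      by rewrite /ph' Ej (rv_finvK H1 j'q).
    * case: (W1 _ _ W2); apply: Hs; [exact: (rv_rng H2 jr).1 | exact: (rv_rng H2 jr).2].
  + move=> i k0; case E1: (wire q c1) W1 => [[j'|] k'] W1 // [<- _].
    exact: (W2 _ _ W1).
Qed.

Lemma rv_ext (p q : pic) Sp Sp' phi : wf R p -> (forall i, i < ntr p -> (Sp i <-> Sp' i)) ->
  restr_via R p Sp q phi -> restr_via R p Sp' q phi.
Proof.
move=> Hwp Heq Hr; rvsplit.
- exact: rv_wf Hr.
- exact: rv_top Hr.
- move=> j jq; have [jp Sj] := rv_rng Hr jq; split=> //; exact/(Heq _ jp).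
- exact: rv_inj Hr.
- move=> i ip Si; apply: (rv_sur Hr ip); exact/(Heq _ ip).
- exact: rv_lab Hr.
- move=> c Hc; have W := rv_wire Hr Hc; have Hp := rv_src Hr Hc.
  case E: (wire q c) W => [[j|] k] W //.
  move=> i k0 Hw; have ip := wf_tgtS Hwp Hp Hw.
  by move=> /(Heq _ ip); apply: W Hw.
Qed.

Lemma rv_id (p : pic) : wf R p -> restr_via R p (fun _ => True) p (fun x => x).
Proof.
move=> Hw; rvsplit.
- exact: Hw.
- by [].
- by [].
- by move=> a b _ _.
- by move=> i ip _; exists i.
- by [].
- move=> c Hc; rewrite mapc_idE; by case: (wire p c) => [[j|] k].
Qed.


Definition emb (D0 v : pic) := exists D psi, dclosed v D /\ restr_via R v D D0 psi.

Lemma emb_rv (p q D0 : pic) Sp phi : restr_via R p Sp q phi -> dclosed p Sp -> emb D0 q -> emb D0 p.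
Proof.
move=> H1 Hd [D [psi [HdD H2]]].
exists (fun i => exists j, j < ntr q /\ phi j = i /\ D j), (fun k => phi (psi k)); split; last exact: rv_comp H1 H2.
move=> a b Hab [j [jq [Ej Dj]]].
have Sa : Sp a by apply: (Hd _ _ Hab); rewrite -Ej; exact: (rv_rng H1 jq).2.
have [ap _] := Hab.
have [j' [j'q Ej']] := rv_sur H1 ap Sa.
exists j'; split=> //; split=> //; apply: (HdD _ j) => //.
by apply: (rv_tedge_b H1 j'q jq); rewrite Ej Ej'.
Qed.

Lemma emb_factor (p q D0 : pic) S1 phi D psi : restr_via R p S1 q phi -> dclosed p D ->
  restr_via R p D D0 psi -> (forall i, i < ntr p -> D i -> S1 i) -> emb D0 q.
Proof.
move=> H1 Hd H2 Hs; exists (fun j => D (phi j)), (fun k => finv phi (ntr q) (psi k)); split.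
- exact: (rv_dclosed H1 Hd).
- exact: rv_factor H1 H2 Hs.
Qed.

Lemma emb_refl (D0 : pic) : wf R D0 -> emb D0 D0.
Proof. move=> Hw; exists (fun _ => True), (fun x => x); split; [by [] | exact: rv_id]. Qed.

Lemma emb_ntr (D0 v : pic) : emb D0 v -> ntr v = 0 -> ntr D0 = 0.
Proof.
move=> [D [psi [_ H]]] Ev; case E: (ntr D0) => [|n] //.
have : 0 < ntr D0 by rewrite E.
by move=> /(rv_rng H) [] ; rewrite Ev.
Qed.

Lemma count_le_in (T : eqType) (a b : pred T) s :
  (forall y, y \in s -> a y -> b y) -> count a s <= count b s.
Proof.
elim: s => [|y s IH] //= Hab.
have H1 : count a s <= count b s by apply: IH => z zs; apply: Hab; rewrite in_cons zs orbT.
case Ay: (a y); first by rewrite (Hab y (mem_head _ _) Ay) /= add1n add1n ltnS.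
by rewrite /= add0n; apply: (leq_trans H1); apply: leq_addl.
Qed.

Lemma count_lt (T : eqType) (a b : pred T) s x :
  (forall y, y \in s -> a y -> b y) -> x \in s -> b x -> ~~ a x -> count a s < count b s.
Proof.
elim: s => [|y s IH] //= Hab.
rewrite in_cons => /orP [/eqP Ex|Hx] Hb Ha.
- subst; rewrite Hb (negbTE Ha) /= add0n add1n ltnS.
  by apply: count_le_in => z zs; apply: Hab; rewrite in_cons zs orbT.
- have H1 : count a s < count b s by apply: IH => // z zs; apply: Hab; rewrite in_cons zs orbT.
  case Ay: (a y); first by rewrite (Hab y (mem_head _ _) Ay).
  by rewrite /= add0n; apply: (leq_trans H1); apply: leq_addl.
Qed.

Lemma exists_max (p : pic) (Q : nat -> Prop) : wf R p ->
  (forall a b, tedge p a b -> Q a -> Q b) ->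
  forall i, i < ntr p -> Q i -> exists t, maximal p t /\ Q t.
Proof.
move=> Hw HQ.
pose m i := count (fun k => pdec (tlt p i k)) (iota 0 (ntr p)).
suff H : forall n i, m i < n -> i < ntr p -> Q i -> exists t, maximal p t /\ Q t.
  by move=> i; apply: (H (m i).+1).
elim=> [|n IH] i // min ip Qi.
case: (classic (exists j, tedge p i j)) => [[j Hij]|Hn]; last first.
  by exists i; split=> //; split=> // j Hj; apply: Hn; exists j.
have [_ [jp _]] := Hij.
apply: (IH j) => //; last exact: HQ Qi.
have Hlt : m j < m i; last by rewrite -ltnS; exact: leq_trans Hlt min.
apply: (@count_lt _ _ _ _ j).
- move=> y _ /pdecP Hy; apply/pdecP; exact: t_trans (t_step _ _ _ _ Hij) Hy.
- by rewrite mem_iota.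
- by apply/pdecP; apply: t_step.
- apply/negP => /pdecP; exact: (proj2 (proj2 (proj2 (proj2 Hw)))) j jp.
Qed.


Lemma pmap_onth (A : eqType) (B : Type) (f : A -> option B) (s : seq A) :
  (forall x, x \in s -> f x <> None) ->
  size (pmap f s) = size s /\ forall i x0, i < size s -> onth (pmap f s) i = f (nth x0 s i).
Proof.
elim: s => [|x s IH] //= Hf.
have {IH} [IH1 IH2] : size (pmap f s) = size s /\ forall i x0, i < size s -> onth (pmap f s) i = f (nth x0 s i).
  by apply: IH => y ys; apply: Hf; rewrite in_cons ys orbT.
case E: (f x) => [y|]; last by have := Hf x (mem_head _ _); rewrite E.
split; first by rewrite /= IH1.
by move=> [|i] x0 //= Hi; rewrite (IH2 i x0).
Qed.

Definition flatsrc (f : nat -> nat) (s : seq nat) : seq contact :=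
  flatten [seq [seq (Some j, k) | k <- iota 0 (f j)] | j <- s].

Lemma flatsrc_mem f s c : (c \in flatsrc f s) =
  (match c with (Some j, k) => (j \in s) && (k < f j) | _ => false end).
Proof.
elim: s => [|j s IH]; first by case: c => [[]].
rewrite /flatsrc /= mem_cat -/(flatsrc f s) IH; clear IH.
case: c => [[j'|] k] /=.
- rewrite in_cons; case: (eqVneq j' j) => [->|ne] /=.
  + rewrite (mem_map (fun a b => _)) ?mem_iota /=; last by move=> a b [].
    by case: (k < f j); rewrite ?andbT ?andbF.
  + apply/idP/idP; last by move=> ->; rewrite orbT.
    case/orP => //; move/mapP => [k' _ [E _]]; by rewrite E eqxx in ne.
- by rewrite orbF; apply/negP => /mapP [].
Qed.

Lemma flatsrc_uniq f s : uniq s -> uniq (flatsrc f s).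
Proof.
elim: s => [|j s IH] //= /andP [js us].
rewrite /flatsrc /= cat_uniq -/(flatsrc f s) IH // andbT.
rewrite map_inj_uniq ?iota_uniq /=; last by move=> a b [].
apply/hasPn => c; rewrite flatsrc_mem; case: c => [[j'|] k] // /andP [j's _].
apply/negP => /mapP [k' _ [E _]]; subst; by rewrite j's in js.
Qed.

Lemma onth_some (T : Type) (s : seq T) k : k < size s -> onth s k <> None.
Proof. by move=> H E; move: (onthTE s k); rewrite E H. Qed.

Lemma src_ok_lab (p : pic) c : src_ok p c -> src_lab p c <> None.
Proof.
case: c => [[i|] k] /=; last exact: onth_some.
by move=> /andP [_ H]; apply: onth_some.
Qed.


Section Gen.
Variables (p : pic) (U : nat -> bool) (tw : seq S) (src0 : nat -> contact).
Hypothesis Hwp : wf R p.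
Definition inU (t : contact) := match t with (Some i, _) => U i | _ => false end.
Hypothesis H0ok : forall k, k < size tw ->
  src_ok p (src0 k) /\ src_lab p (src0 k) = onth tw k /\ ~~ inU (src0 k).
Hypothesis H0inj : forall k k', k < size tw -> k' < size tw -> src0 k = src0 k' -> k = k'.
Hypothesis Hsurj : forall c, src_ok p c -> inU (wire p c) ->
  (exists k, k < size tw /\ src0 k = c) \/ (exists i k, c = (Some i, k) /\ U i).

Definition idx := [seq i <- iota 0 (ntr p) | U i].
Definition phiG j := nth 0 idx j.
Definition srcsQ : seq contact :=
  [seq (None, k) | k <- iota 0 (size tw)] ++ flatsrc (fun j => size (blab p (phiG j))) (iota 0 (size idx)).
Definition smap (c : contact) : contact :=
  match c with (None, k) => src0 k | (Some j, k) => (Some (phiG j), k) end.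
Definition ptgt c := wire p (smap c).
Definition esc := [seq c <- srcsQ | ~~ inU (ptgt c)].
Definition wireG (c : contact) : contact :=
  match ptgt c with
  | (Some i, k) => if U i then (Some (index i idx), k) else (None, index c esc)
  | (None, _) => (None, index c esc) end.
Definition labG c := src_lab p (smap c).
Definition G : pic := Pic tw (pmap labG esc) (size idx)
  (fun j => tlab p (phiG j)) (fun j => blab p (phiG j)) wireG.

Lemma idx_uniq : uniq idx.
Proof. exact: filter_uniq (iota_uniq 0 _). Qed.
Lemma phiG_ok j : j < size idx -> phiG j < ntr p /\ U (phiG j).
Proof.
move=> H; have := mem_nth 0 H; rewrite mem_filter mem_iota => /andP [-> /andP [_ ->]].
by [].
Qed.
Lemma idx_mem i : i < ntr p -> U i -> i \in idx.
Proof. by move=> ip Ui; rewrite mem_filter Ui mem_iota. Qed.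
Lemma index_idx i : i \in idx -> index i idx < size idx /\ phiG (index i idx) = i.
Proof. by move=> H; rewrite index_mem H /phiG nth_index. Qed.
Lemma index_phiG j : j < size idx -> index (phiG j) idx = j.
Proof. move=> H; exact: index_uniq H idx_uniq. Qed.

Lemma srcsQ_mem c : (c \in srcsQ) = src_ok G c.
Proof.
rewrite /srcsQ mem_cat flatsrc_mem; case: c => [[j|] k] /=.
- have -> : ((Some j, k) \in [seq (None, k) | k <- iota 0 (size tw)]) = false.
    by apply/negP => /mapP [? _ []].
  by rewrite mem_iota.
- rewrite orbF; apply/mapP/idP => [[k' H [->]]| H]; first by move: H; rewrite mem_iota.
  by exists k; rewrite ?mem_iota.
Qed.
Lemma srcsQ_uniq : uniq srcsQ.
Proof.
rewrite /srcsQ cat_uniq flatsrc_uniq ?iota_uniq // andbT.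
rewrite map_inj_uniq ?iota_uniq /=; last by move=> a b [].
apply/hasPn => c; rewrite flatsrc_mem; case: c => [[j|] k] // _.
by apply/negP => /mapP [].
Qed.

Lemma smap_ok c : src_ok G c -> src_ok p (smap c) /\ src_lab p (smap c) = src_lab G c.
Proof.
case: c => [[j|] k] /=.
- by move=> /andP [jq kb]; rewrite (phiG_ok jq).1 kb.
- by move=> kb; have [? [? _]] := H0ok kb.
Qed.

Lemma smap_inj c c' : src_ok G c -> src_ok G c' -> smap c = smap c' -> c = c'.
Proof.
case: c => [[j|] k]; case: c' => [[j'|] k'] /=.
- move=> /andP [jq _] /andP [j'q _] [E ->].
  by rewrite -(index_phiG jq) E index_phiG.
- move=> /andP [jq _] kb E; have [_ [_ H]] := H0ok kb.
  by rewrite -E /= (phiG_ok jq).2 in H.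
- move=> kb /andP [jq _] E; have [_ [_ H]] := H0ok kb.
  by rewrite E /= (phiG_ok jq).2 in H.
- by move=> kb k'b /(H0inj kb k'b) ->.
Qed.

Lemma esc_mem c : (c \in esc) = src_ok G c && ~~ inU (ptgt c).
Proof. by rewrite mem_filter srcsQ_mem andbC. Qed.

Lemma wireG_esc c : ~~ inU (ptgt c) -> wireG c = (None, index c esc).
Proof. by rewrite /wireG; case: (ptgt c) => [[i|] k] //= /negbTE ->. Qed.
Lemma wireG_U c i k : ptgt c = (Some i, k) -> U i -> wireG c = (Some (index i idx), k).
Proof. by rewrite /wireG => -> ->. Qed.

Lemma labG_some : size (pmap labG esc) = size esc /\
  forall i x0, i < size esc -> onth (pmap labG esc) i = labG (nth x0 esc i).
Proof.
apply: pmap_onth => c; rewrite esc_mem => /andP [Hc _].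
by rewrite /labG; apply: src_ok_lab; exact: (smap_ok Hc).1.
Qed.

Lemma G_wf : wf R G.
Proof.
have Hacy : forall a b, tedge G a b -> tedge p (phiG a) (phiG b).
  move=> a b [aq [bq [k [k' [Hs Hw]]]]].
  split; first exact: (phiG_ok aq).1.
  split; first exact: (phiG_ok bq).1.
  exists k, k'; split; first exact: (smap_ok Hs).1.
  change (wire p (smap (Some a, k)) = (Some (phiG b), k')).
  case Ec: (inU (ptgt (Some a, k))); last by move: Hw; rewrite /= (wireG_esc (negbT Ec)).
  move: Ec Hw; rewrite /ptgt /=; case E: (wire p (Some (phiG a), k)) => [[i|] k''] // Ui.
  have Ep : ptgt (Some a, k) = (Some i, k'') by [].
  rewrite /= (wireG_U Ep Ui) => [[Eb ->]].
  have iq : i \in idx by apply: idx_mem => //; apply: (wf_tgtS Hwp (smap_ok Hs).1 E).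
  by rewrite -Eb (index_idx iq).2.
split; [|split; [|split; [|split]]].
- by move=> j /= jq; have [jp _] := phiG_ok jq; apply: (proj1 Hwp).
- move=> c Hc; have [Hp Hl] := smap_ok Hc.
  have [Ht Htl] := (proj1 (proj2 Hwp)) _ Hp.
  have -> : wire G c = wireG c by [].
  case Ec: (inU (ptgt c)).
  + move: Ec; rewrite /ptgt; case E: (wire p (smap c)) Ht Htl => [[i|] k] //= Ht Htl Ui.
    rewrite (wireG_U E Ui) /=.
    have ii : i \in idx by apply: idx_mem => //; move: Ht => /andP [].
    have [H1 H2] := index_idx ii.
    by rewrite H1 H2 -Hl -Htl; move: Ht => /andP [_ ->].
  + rewrite wireG_esc ?Ec //=.
    have ce : c \in esc by rewrite esc_mem Hc Ec.
    have [L1 L2] := labG_some.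
    by rewrite L1 index_mem ce (L2 _ (None, 0)) ?index_mem // nth_index // /labG Hl.
- move=> c c' Hc Hc'.
  have -> : wire G c = wireG c by [].
  have -> : wire G c' = wireG c' by [].
  have Hp := (smap_ok Hc).1; have Hp' := (smap_ok Hc').1.
  case Ec: (inU (ptgt c)); case Ec': (inU (ptgt c')).
  + move: Ec Ec'; rewrite /ptgt.
    case E: (wire p (smap c)) => [[i|] k] //; case E': (wire p (smap c')) => [[i'|] k'] // Ui Ui'.
    rewrite (wireG_U E Ui) (wireG_U E' Ui') => [[Ei Ek]]; subst k'.
    have ii : i \in idx by apply: idx_mem => //; apply: (wf_tgtS Hwp Hp E).
    have ii' : i' \in idx by apply: idx_mem => //; apply: (wf_tgtS Hwp Hp' E').
    have Eii : i = i' by rewrite -(index_idx ii).2 Ei (index_idx ii').2.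
    subst; rewrite -E' in E.
    by apply: smap_inj => //; apply: (proj1 (proj2 (proj2 Hwp))) E.
  + move: Ec; rewrite (wireG_esc (negbT Ec')) /ptgt.
    by case E: (wire p (smap c)) => [[i|] k] // Ui; rewrite (wireG_U E Ui).
  + move: Ec'; rewrite (wireG_esc (negbT Ec)) /ptgt.
    by case E: (wire p (smap c')) => [[i|] k] // Ui; rewrite (wireG_U E Ui).
  + rewrite (wireG_esc (negbT Ec)) (wireG_esc (negbT Ec')) => [[E]].
    have ce : c \in esc by rewrite esc_mem Hc Ec.
    have ce' : c' \in esc by rewrite esc_mem Hc' Ec'.
    by rewrite -(nth_index (None, 0) ce) E nth_index.
- move=> [[j|] k] /=.
  + move=> /andP [jq kb]; have [jp Uj] := phiG_ok jq.
    have Htg : tgt_ok p (Some (phiG j), k) by rewrite /= jp.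
    have [cp [Hcp Ecp]] := (proj1 (proj2 (proj2 (proj2 Hwp)))) _ Htg.
    have Hin : inU (wire p cp) by rewrite Ecp.
    case: (Hsurj Hcp Hin) => [[k0 [k0b E0]]|[i [k1 [Ec Ui]]]].
    * exists (None, k0); split=> //.
      have Ep : ptgt (None, k0) = (Some (phiG j), k) by rewrite /ptgt /= E0.
      by rewrite (wireG_U Ep Uj) index_phiG.
    * subst cp; have ii : i \in idx by apply: idx_mem => //; move: Hcp => /andP [].
      have [H1 H2] := index_idx ii.
      exists (Some (index i idx), k1); split.
      - by rewrite /= H1 H2; move: Hcp => /andP [].
      - have Ep : ptgt (Some (index i idx), k1) = (Some (phiG j), k) by rewrite /ptgt /= H2.
        by rewrite (wireG_U Ep Uj) index_phiG.
  + have [L1 L2] := labG_some.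
    rewrite L1 => mb; exists (nth (None, 0) esc k).
    have ce := mem_nth (None, 0) mb.
    move: (ce); rewrite esc_mem => /andP [Hc Ec]; split=> //.
    by rewrite (wireG_esc Ec) index_uniq // filter_uniq // srcsQ_uniq.
- move=> i iq Hc.
  have H : forall a b, tlt G a b -> tlt p (phiG a) (phiG b).
    move=> a b; elim=> [x y /Hacy Hxy|x y z _ H1 _ H2]; first exact: t_step.
    exact: t_trans H1 H2.
  have [ip _] := phiG_ok iq.
  exact: (proj2 (proj2 (proj2 (proj2 Hwp)))) _ ip (H _ _ Hc).
Qed.

End Gen.


Lemma restr_exists (p : pic) (Sp : nat -> Prop) : wf R p -> dclosed p Sp ->
  exists q phi, restr_via R p Sp q phi /\ ntr q = count (fun i => pdec (Sp i)) (iota 0 (ntr p)).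
Proof.
move=> Hw Hd.
pose U i := pdec (Sp i).
pose src0 (k : nat) : contact := (None, k).
have H0ok : forall k, k < size (topw p) ->
  src_ok p (src0 k) /\ src_lab p (src0 k) = onth (topw p) k /\ ~~ inU U (src0 k) by [].
have H0inj : forall k k', k < size (topw p) -> k' < size (topw p) -> src0 k = src0 k' -> k = k'.
  by move=> k k' _ _ [].
have Hsurj : forall c, src_ok p c -> inU U (wire p c) ->
  (exists k, k < size (topw p) /\ src0 k = c) \/ (exists i k, c = (Some i, k) /\ U i).
  move=> [[i|] k] Hc; last by move=> _; left; exists k.
  case E: (wire p (Some i, k)) => [[j|] k'] //= Uj; right; exists i, k; split=> //.
  apply/pdecP; apply: (Hd i j); last exact/pdecP.
  move: (Hc) => /= /andP [ip _].
  split=> //; split; first exact: (wf_tgtS Hw Hc E).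
  by exists k, k'.
exists (G p U (topw p) src0), (phiG p U); split; last by rewrite /= size_filter.
have Hwf := G_wf Hw H0ok H0inj Hsurj.
rvsplit.
- exact: Hwf.
- by [].
- by move=> j jq; have [H1 /pdecP H2] := phiG_ok jq.
- by move=> a b aq bq E; rewrite -(index_phiG aq) E index_phiG.
- move=> i ip Si; have ii : i \in idx p U by apply: idx_mem => //; exact/pdecP.
  by exists (index i (idx p U)); apply: index_idx.
- by [].
- move=> c Hc.
  have Em : mapc (phiG p U) c = smap p U src0 c by case: c Hc => [[j|] k].
  have -> : wire (G p U (topw p) src0) c = wireG p U (topw p) src0 c by [].
  rewrite Em.
  case Ec: (inU U (ptgt p U src0 c)).
  + move: Ec; case E: (ptgt p U src0 c) => [[i|] k] // Ui.
    rewrite (wireG_U (topw p) E Ui).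
    have ii : i \in idx p U by apply: idx_mem => //; apply: (wf_tgtS Hw _ E); exact: (smap_ok H0ok Hc).1.
    by rewrite (index_idx ii).2.
  + rewrite (wireG_esc (topw p) (negbT Ec)) => i k E.
    by move: Ec; rewrite /ptgt E /= => /negbT /negP Hn Si; apply: Hn; apply/pdecP.
Qed.


Definition allsrc (p : pic) : seq contact :=
  [seq (None, k) | k <- iota 0 (size (topw p))] ++ flatsrc (fun j => size (blab p j)) (iota 0 (ntr p)).
Lemma allsrc_mem p c : (c \in allsrc p) = src_ok p c.
Proof.
rewrite /allsrc mem_cat flatsrc_mem; case: c => [[j|] k] /=.
- have -> : ((Some j, k) \in [seq (None, k) | k <- iota 0 (size (topw p))]) = false.
    by apply/negP => /mapP [? _ []].
  by rewrite mem_iota.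
- rewrite orbF; apply/mapP/idP => [[k' H [->]]| H]; first by move: H; rewrite mem_iota.
  by exists k; rewrite ?mem_iota.
Qed.

Definition through (p th : pic) (d : contact) : contact :=
  match d with (None, m) => shiftc (ntr p) (wire th (None, m)) | d => d end.
Lemma concat_top (p th : pic) k : wire (concat p th) (None, k) = through p th (wire p (None, k)).
Proof. by []. Qed.
Lemma concat_lo (p th : pic) j k : j < ntr p -> wire (concat p th) (Some j, k) = through p th (wire p (Some j, k)).
Proof. by move=> H; rewrite /concat /= H. Qed.
Lemma concat_hi (p th : pic) j k : ntr p <= j ->
  wire (concat p th) (Some j, k) = shiftc (ntr p) (wire th (Some (j - ntr p), k)).
Proof. by move=> H; rewrite /concat /= ltnNge H. Qed.
Lemma concat_tlab (p th : pic) j : tlab (concat p th) j = if j < ntr p then tlab p j else tlab th (j - ntr p).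
Proof. by []. Qed.
Lemma concat_blab (p th : pic) j : blab (concat p th) j = if j < ntr p then blab p j else blab th (j - ntr p).
Proof. by []. Qed.

Section Cons.
Variables (D0 v : pic) (D : nat -> Prop) (psi : nat -> nat).
Hypothesis HwD : wf R D0.
Hypothesis Hwv : wf R v.
Hypothesis Hd : dclosed v D.
Hypothesis Hr : restr_via R v D D0 psi.

Definition cm (m : nat) : contact :=
  nth (None, 0) (allsrc D0) (find (fun c => wire D0 c == (None, m)) (allsrc D0)).
Lemma cm_spec m : m < size (botw D0) -> src_ok D0 (cm m) /\ wire D0 (cm m) = (None, m).
Proof.
move=> mb.
have Ht : tgt_ok D0 (None, m) by [].
have [c [Hc Ec]] := (proj1 (proj2 (proj2 (proj2 HwD)))) _ Ht.
have Hh : has (fun c => wire D0 c == (None, m)) (allsrc D0).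
  by apply/hasP; exists c; rewrite ?allsrc_mem // Ec.
split; last by have := nth_find (None, 0) Hh => /eqP.
by rewrite -allsrc_mem; apply: mem_nth; rewrite -has_find.
Qed.
Lemma cm_uniq m c : m < size (botw D0) -> src_ok D0 c -> wire D0 c = (None, m) -> cm m = c.
Proof.
move=> mb Hc E; have [H1 H2] := cm_spec mb.
by apply: (proj1 (proj2 (proj2 HwD)) _ _ H1 Hc); rewrite H2 E.
Qed.

Definition Uc i := ~~ pdec (D i).
Definition src0c m := mapc psi (cm m).

Lemma mapc_psi_inj c c' : src_ok D0 c -> src_ok D0 c' -> mapc psi c = mapc psi c' -> c = c'.
Proof.
case: c => [[j|] k]; case: c' => [[j'|] k'] //=.
- move=> /andP [jq _] /andP [j'q _] [E ->]; by rewrite (rv_inj Hr jq j'q E).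
Qed.

Lemma Dside c0 i k : src_ok D0 c0 -> wire v (mapc psi c0) = (Some i, k) -> ~ D i ->
  exists m, m < size (botw D0) /\ cm m = c0.
Proof.
move=> Hc0 E nDi.
have W := rv_wire Hr Hc0.
case E0: (wire D0 c0) W => [[j|] m] W.
- rewrite W in E; case: E => Ei _; subst.
  have jq : j < ntr D0 by apply: (wf_tgtS HwD Hc0 E0).
  by case: nDi; exact: (rv_rng Hr jq).2.
- have mb : m < size (botw D0) by have := wf_tgt HwD Hc0; rewrite E0.
  by exists m; split=> //; apply: cm_uniq.
Qed.

Definition thc := G v Uc (botw D0) src0c.

Lemma H0ok_c : forall k, k < size (botw D0) ->
  src_ok v (src0c k) /\ src_lab v (src0c k) = onth (botw D0) k /\ ~~ inU Uc (src0c k).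
Proof.
move=> m mb; have [Hc Ew] := cm_spec mb.
split; first by have := rv_src Hr Hc.
split.
- rewrite /src0c (rv_srclab Hr Hc).
  have [_ Hl] := (proj1 (proj2 HwD)) _ Hc.
  by rewrite -Hl Ew.
- rewrite /src0c; move: Hc; case: (cm m) => [[j|] k] //= /andP [jq _].
  by rewrite /Uc negbK; apply/pdecP; exact: (rv_rng Hr jq).2.
Qed.

Lemma H0inj_c : forall k k', k < size (botw D0) -> k' < size (botw D0) -> src0c k = src0c k' -> k = k'.
Proof.
move=> m m' mb m'b E.
have [Hc Ew] := cm_spec mb; have [Hc' Ew'] := cm_spec m'b.
have := mapc_psi_inj Hc Hc' E => E2.
by move: Ew; rewrite E2 Ew' => [[]].
Qed.

Lemma Hsurj_c : forall c, src_ok v c -> inU Uc (wire v c) ->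
  (exists k, k < size (botw D0) /\ src0c k = c) \/ (exists i k, c = (Some i, k) /\ Uc i).
Proof.
move=> c Hc; case E: (wire v c) => [[i|] k] //= Ui.
have nDi : ~ D i by move=> Di; move: Ui; rewrite /Uc; have -> : pdec (D i) by exact/pdecP.
case: c Hc E => [[i'|] k'] Hc E.
- case: (classic (D i')) => Di'; last first.
    by right; exists i', k'; split=> //; rewrite /Uc; apply/negP => /pdecP.
  have i'p : i' < ntr v by move: Hc => /= /andP [].
  have [j [jq Ej]] := rv_sur Hr i'p Di'.
  have Hc0 : src_ok D0 (Some j, k') by rewrite /= jq (rv_lab Hr jq).2 Ej; move: Hc => /= /andP [].
  have E' : wire v (mapc psi (Some j, k')) = (Some i, k) by rewrite /= Ej.
  have [m [mb Em]] := Dside Hc0 E' nDi.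
  by left; exists m; split=> //; rewrite /src0c Em /= Ej.
- have Hc0 : src_ok D0 (None, k') by move: Hc; rewrite /= (rv_top Hr).
  have [m [mb Em]] := Dside Hc0 E nDi.
  by left; exists m; split=> //; rewrite /src0c Em.
Qed.

Lemma thc_wf : wf R thc.
Proof. exact: G_wf Hwv H0ok_c H0inj_c Hsurj_c. Qed.

End Cons.


Lemma emb_le (D0 v : pic) : wf R D0 -> wf R v -> emb D0 v -> le_v R D0 v.
Proof.
move=> HwD Hwv [D [psi [Hd Hr]]].
set th := thc D0 v D psi.
have Hwth : wf R th by apply: thc_wf.
exists th; split=> //; split=> //.
set n0 := ntr D0.
set idxv := idx v (Uc D).
pose chi i := if pdec (D i) then finv psi n0 i else index i idxv + n0.
have FD : forall i, i < ntr v -> D i -> chi i = finv psi n0 i /\ finv psi n0 i < n0 /\ psi (finv psi n0 i) = i.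
  move=> i ip Di; rewrite /chi; have -> : pdec (D i) by exact/pdecP.
  by have [H1 H2] := rv_finv Hr ip Di.
have FN : forall i, i < ntr v -> ~ D i -> chi i = index i idxv + n0 /\ index i idxv < size idxv /\ phiG v (Uc D) (index i idxv) = i.
  move=> i ip nDi; rewrite /chi; have -> : pdec (D i) = false by apply/negP => /pdecP.
  have ii : i \in idxv by apply: idx_mem => //; rewrite /Uc; apply/negP => /pdecP.
  by have [H1 H2] := index_idx ii.
have Hwth' : forall c, wire th c = wireG v (Uc D) (botw D0) (src0c D0 psi) c by [].
exists chi; rvsplit.
- exact: Hwv.
- by rewrite /= (rv_top Hr).
- move=> j jv; split=> //; rewrite /=.
  case: (classic (D j)) => Dj.
  + have [-> [H _]] := FD j jv Dj; exact: leq_trans H (leq_addr _ _).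
  + have [-> [H _]] := FN j jv Dj; by rewrite addnC ltn_add2l.
- move=> a b av bv.
  case: (classic (D a)) => Da; case: (classic (D b)) => Db.
  + have [-> [_ Ha]] := FD a av Da; have [-> [_ Hb]] := FD b bv Db.
    by move=> E; rewrite -Ha E Hb.
  + have [-> [Ha _]] := FD a av Da; have [-> _] := FN b bv Db => E.
    by move: Ha; rewrite E ltnNge leq_addl.
  + have [-> _] := FN a av Da; have [-> [Hb _]] := FD b bv Db => E.
    by move: Hb; rewrite -E ltnNge leq_addl.
  + have [-> [_ Ha]] := FN a av Da; have [-> [_ Hb]] := FN b bv Db.
    by move=> /addIn E; rewrite -Ha E Hb.
- move=> i /= ib _.
  case: (ltnP i n0) => Hi.
  + have [ip Di] := rv_rng Hr Hi.
    exists (psi i); split=> //; have [-> _] := FD _ ip Di.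
    exact: (rv_finvK Hr Hi).
  + have Hj : i - n0 < size idxv by rewrite ltn_subLR // addnC.
    have [jp Uj] := phiG_ok Hj.
    have nDj : ~ D (phiG v (Uc D) (i - n0)) by move: Uj; rewrite /Uc => /negP Hn Dj; apply: Hn; apply/pdecP.
    exists (phiG v (Uc D) (i - n0)); split=> //.
    have [-> _] := FN _ jp nDj.
    by rewrite (index_phiG Hj) subnK.
- move=> j jv; rewrite concat_tlab concat_blab.
  case: (classic (D j)) => Dj.
  + have [-> [H1 H2]] := FD j jv Dj; rewrite H1.
    have [L1 L2] := rv_lab Hr H1; by rewrite L1 L2 H2.
  + have [-> [H1 H2]] := FN j jv Dj; rewrite ltnNge leq_addl /= addnK.
    by rewrite /= H2.
- move=> c Hc.
  have KD : forall c0, src_ok D0 c0 -> mapc psi c0 = c -> mapc chi c = c0 ->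
      wire (concat D0 th) c0 = through D0 th (wire D0 c0) ->
      match wire v c with
      | (Some j, k) => wire (concat D0 th) (mapc chi c) = (Some (chi j), k)
      | (None, _) => forall i k, wire (concat D0 th) (mapc chi c) = (Some i, k) -> ~ True
      end.
    move=> c0 Hc0 E1 E2 E3; rewrite E2 E3.
    have W := rv_wire Hr Hc0; rewrite E1 in W.
    case E0: (wire D0 c0) W => [[j0|] m] W.
    + rewrite W /=.
      have j0q : j0 < n0 by apply: (wf_tgtS HwD Hc0 E0).
      have [jp Dj] := rv_rng Hr j0q.
      by have [-> _] := FD _ jp Dj; rewrite (rv_finvK Hr j0q).
    + have mb : m < size (botw D0) by have := wf_tgt HwD Hc0; rewrite E0.
      have Ecm : cm D0 m = c0 by apply: cm_uniq.
      have Ept : ptgt v (Uc D) (src0c D0 psi) (None, m) = wire v c by rewrite /ptgt /= /src0c Ecm E1.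
      rewrite /through Hwth'.
      case Ew: (wire v c) Ept => [[j|] k] Ept.
      * have jv : j < ntr v by apply: (wf_tgtS Hwv Hc Ew).
        have nDj : ~ D j by apply: (W j k).
        have Uj : Uc D j by rewrite /Uc; apply/negP => /pdecP.
        rewrite (wireG_U (botw D0) Ept Uj) /=.
        by have [-> _] := FN _ jv nDj.
      * have Hn : ~~ inU (Uc D) (ptgt v (Uc D) (src0c D0 psi) (None, m)) by rewrite Ept.
        by rewrite (wireG_esc (botw D0) Hn).
  case: c Hc KD => [[i|] k] Hc KD.
  + have ip : i < ntr v by move: Hc => /= /andP [].
    case: (classic (D i)) => Di.
    * have [Ec [H1 H2]] := FD i ip Di.
      apply: (KD (Some (finv psi n0 i), k)).
      - by rewrite /= H1 (rv_lab Hr H1).2 H2; move: Hc => /= /andP [].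
      - by rewrite /= H2.
      - by rewrite /= Ec.
      - exact: concat_lo.
    * have [Ec [H1 H2]] := FN i ip Di.
      have Ept : ptgt v (Uc D) (src0c D0 psi) (Some (index i idxv), k) = wire v (Some i, k) by rewrite /ptgt /= H2.
      have -> : mapc chi (Some i, k) = (Some (index i idxv + n0), k) by rewrite /= Ec.
      rewrite concat_hi ?leq_addl // addnK Hwth'.
      case Ew: (wire v (Some i, k)) Ept => [[j|] k'] Ept.
      - have jv : j < ntr v by apply: (wf_tgtS Hwv Hc Ew).
        have nDj : ~ D j by move=> Dj; apply: Di; apply: (Hd i j) => //; split=> //; split=> //; exists k, k'.
        have Uj : Uc D j by rewrite /Uc; apply/negP => /pdecP.
        rewrite (wireG_U (botw D0) Ept Uj) /=.
        by have [-> _] := FN _ jv nDj.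
      - have Hn : ~~ inU (Uc D) (ptgt v (Uc D) (src0c D0 psi) (Some (index i idxv), k)) by rewrite Ept.
        by rewrite (wireG_esc (botw D0) Hn).
  + apply: (KD (None, k)) => //.
    by move: Hc; rewrite /= (rv_top Hr).
Qed.


Lemma shiftc_some n d i k : shiftc n d = (Some i, k) -> n <= i.
Proof. by case: d => [[a|] b] //= [<- _]; apply: leq_addl. Qed.

Lemma le_emb (D0 v : pic) : wf R D0 -> wf R v -> le_v R D0 v -> emb D0 v.
Proof.
move=> HwD Hwv [th [Hwth [Htop [chi H]]]].
set P := concat D0 th.
set n0 := ntr D0.
have Hinj := rv_inj H.
have FP : forall j, j < n0 -> finv chi (ntr v) j < ntr v /\ chi (finv chi (ntr v) j) = j.
  move=> j jn; apply: finv_spec; apply: (rv_sur H) => //.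
  by rewrite /= ltn_addr.
have FK : forall i, i < ntr v -> finv chi (ntr v) (chi i) = i by move=> i; apply: finvK.
exists (fun i => chi i < n0), (fun j => finv chi (ntr v) j); split.
- move=> a b [av [bv [k [k' [Hs Hw]]]]] Hb.
  have W := rv_wire H Hs; rewrite Hw in W.
  change (wire (concat D0 th) (Some (chi a), k) = (Some (chi b), k')) in W.
  case: (ltnP (chi a) n0) => // Ha.
  by move: W; rewrite concat_hi // => /shiftc_some; rewrite leqNgt Hb.
rvsplit.
- exact: HwD.
- by rewrite (rv_top H).
- by move=> j jn; have [H1 H2] := FP j jn; rewrite H2.
- by move=> a b an bn E; rewrite -(FP a an).2 E (FP b bn).2.
- by move=> i iv ci; exists (chi i); split=> //; apply: FK.
- move=> j jn; have [H1 H2] := FP j jn.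
  have [L1 L2] := rv_lab H H1.
  by rewrite L1 L2 H2 concat_tlab concat_blab jn.
- move=> c Hc.
  set c' := mapc (fun j => finv chi (ntr v) j) c.
  have [Hc' [Ec' EP]] : src_ok v c' /\ mapc chi c' = c /\ wire P c = through D0 th (wire D0 c).
    case: c Hc @c' => [[j|] k] /=.
    + move=> /andP [jn kb]; have [H1 H2] := FP j jn.
      rewrite H1 H2 (rv_lab H H1).2 H2 concat_blab jn kb; split=> //; split=> //.
    + move=> kb; split; first by rewrite (rv_top H).
      split=> //; rewrite /through; by case: (wire D0 (None, k)) => [[?|] ?].
  have W := rv_wire H Hc'; rewrite Ec' EP in W.
  case E0: (wire D0 c) => [[j|] k].
  + rewrite E0 /= in W.
    have jn : j < n0 by apply: (wf_tgtS HwD Hc E0).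
    case Ev: (wire v c') W => [[j'|] k'] W.
    * have j'v : j' < ntr v by apply: (wf_tgtS Hwv Hc' Ev).
      by case: W => -> ->; rewrite FK.
    * by case: (W _ _ erefl).
  + rewrite E0 /= in W => i k' Ev.
    rewrite Ev in W.
    by move: W => /shiftc_some; rewrite leqNgt => /negP.
Qed.


Lemma tle_dclosed (p : pic) t : dclosed p (fun i => tle p i t).
Proof.
move=> a b Hab [<-|Hb]; first by right; apply: t_step.
by right; apply: t_trans (t_step _ _ _ _ Hab) Hb.
Qed.
Lemma dclosed_tlt (p : pic) D a b : dclosed p D -> tlt p a b -> D b -> D a.
Proof.
move=> Hd; elim=> [x y Hxy|x y z _ H1 _ H2]; first exact: Hd.
by move=> Dz; apply: H1; apply: H2.
Qed.
Lemma max_dclosed (p : pic) t : maximal p t -> dclosed p (fun i => i <> t).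
Proof. by move=> [_ Hm] a b Hab _ E; subst; apply: (Hm b). Qed.
Lemma max_not_tlt (p : pic) t b : maximal p t -> ~ tlt p t b.
Proof.
move=> [_ Hm] Ht; have H := clos_trans_t1n _ _ _ _ Ht; case: H => [y Hy|y z Hy _]; exact: Hm Hy.
Qed.
Lemma count_neq n t : t < n -> count (fun i => pdec (i <> t)) (iota 0 n) < n.
Proof.
move=> tn.
have H := @count_lt _ (fun i => pdec (i <> t)) predT (iota 0 n) t.
rewrite count_predT size_iota in H; apply: H => //.
- by rewrite mem_iota.
- by apply/negP => /pdecP.
Qed.

Section Hyp.
Variable w : seq S.
Variables (e : medge S) (Dl : pic) (phi0 : nat -> nat) (t0 : nat).
Hypothesis He : is_edge R w e.
Hypothesis Hmin : restr_via R e.1 (fun i => tle e.1 i e.2) Dl phi0.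
Hypothesis Ht0 : t0 < ntr Dl.
Hypothesis Et0 : phi0 t0 = e.2.

Definition Pe (f : medge S) := exists psi,
  restr_via R f.1 (fun i => tle f.1 i f.2) Dl psi /\ psi t0 = f.2.

Lemma InvG (p q : pic) Sp phi t : restr_via R p Sp q phi -> dclosed p Sp -> wf R p ->
  (forall i, i < ntr p -> tle p i (phi t) -> Sp i) -> t < ntr q ->
  ((exists psi, restr_via R p (fun i => tle p i (phi t)) Dl psi /\ psi t0 = phi t) <->
   (exists psi, restr_via R q (fun i => tle q i t) Dl psi /\ psi t0 = t)).
Proof.
move=> Hr Hd Hwp Hs tq; split.
- move=> [psi [H1 H2]].
  exists (fun k => finv phi (ntr q) (psi k)); split; last by rewrite H2 (rv_finvK Hr tq).
  apply: rv_ext (rv_wf Hr) _ (rv_factor Hr H1 Hs).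
  move=> j jq; split; [move=> H; exact: (rv_tle_b Hr Hd jq tq H)|exact: (rv_tle Hr)].
- move=> [psi [H1 H2]].
  exists (fun k => phi (psi k)); split; last by rewrite H2.
  apply: rv_ext Hwp _ (rv_comp Hr H1).
  move=> i ip; split.
  + by move=> [j [jq [<- Hj]]]; apply: (rv_tle Hr).
  + move=> Hi; have [j [jq Ej]] := rv_sur Hr ip (Hs _ ip Hi).
    by exists j; split=> //; split=> //; apply: (rv_tle_b Hr) => //; rewrite Ej.
Qed.

Lemma Inv f f' : hrel R w f f' -> (Pe f <-> Pe f').
Proof.
move=> [[[Hw1 _] _] [[_ Hm']] [[phi [Hr Ep]]|[t2 [Hm2 [Hne [phi [Hr Ep]]]]]]].
- rewrite /Pe -Ep; apply: (InvG Hr) => //; exact: (proj1 Hm').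
- rewrite /Pe -Ep; apply: (InvG Hr) => //.
  + exact: max_dclosed.
  + move=> i ip [E|Ht] Ei; subst.
    * by apply: Hne; rewrite Ep.
    * by apply: (max_not_tlt Hm2 Ht).
  + exact: (proj1 Hm').
Qed.

Lemma Pe_e : Pe e.
Proof. by exists phi0. Qed.

Lemma Hyp_P f : hyperplane R w e f -> Pe f.
Proof.
move=> [_ H].
suff K : forall x y, clos_refl_sym_trans (medge S) (hrel R w) x y -> (Pe x <-> Pe y).
  by apply/(K _ _ H); exact: Pe_e.
move=> x y; elim=> [a b /Inv //|a //| a b _ IH|a b c _ IH1 _ IH2].
- by rewrite IH.
- by rewrite IH1.
Qed.

Lemma t0_top j : j < ntr Dl -> tle Dl j t0.
Proof.
move=> jn; apply: (rv_tle_b Hmin) => //; first exact: tle_dclosed.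
by rewrite Et0; exact: (rv_rng Hmin jn).2.
Qed.
Lemma max_t0 j : j < ntr Dl -> maximal Dl j -> j = t0.
Proof. by move=> jn Hm; case: (t0_top jn) => // /(max_not_tlt Hm). Qed.

Lemma Dl_edge : is_edge R w (Dl, t0).
Proof.
have [[Hw1 [Htop Hred]] Hm] := He.
split; first split.
- exact: rv_wf Hmin.
- by split; [rewrite (rv_top Hmin)| exact: rv_reduced Hmin Hred].
- by apply: (rv_maximal Hmin) => //=; rewrite Et0.
Qed.

Lemma Chain f : is_edge R w f -> Pe f -> clos_refl_sym_trans (medge S) (hrel R w) f (Dl, t0).
Proof.
move: {2}(ntr f.1) (leqnn (ntr f.1)) => n; elim: n f => [|n IH] f Hn Hf [psi [Hr Ep]].
all: case: (classic (forall i, i < ntr f.1 -> tle f.1 i f.2)) => Hall.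
all: try (apply: rst_step; split=> //; split; first exact: Dl_edge;
  left; exists psi; split=> //; apply: rv_ext (proj1 (proj1 Hf)) _ Hr => i ip; split=> // _; exact: Hall).
- by exfalso; apply: Hall => i; rewrite leqn0 in Hn; rewrite (eqP Hn).
- have [i [ip Hi]] : exists i, i < ntr f.1 /\ ~ tle f.1 i f.2.
    apply: NNPP => Hn2; apply: Hall => i ip; apply: NNPP => Hi; apply: Hn2; by exists i.
  have Hwf := proj1 (proj1 Hf).
  have [t2 [Hm2 Q2]] := @exists_max f.1 (fun i => ~ tle f.1 i f.2) Hwf
     (fun a b Hab Ha Hb => Ha (tle_dclosed Hab Hb)) i ip Hi.
  have Hne : t2 <> f.2 by move=> E; apply: Q2; left.
  have [q [phi [Hq Hcnt]]] := restr_exists Hwf (max_dclosed Hm2).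
  have f2p : f.2 < ntr f.1 by case: (proj2 Hf).
  have [t'q Et'] := rv_finv Hq f2p (fun E => Hne (esym E)).
  set t' := finv phi (ntr q) f.2 in t'q Et'.
  have Hf' : is_edge R w (q, t').
    have [[_ [Htop Hred]] Hm] := Hf.
    split; first split.
    + exact: rv_wf Hq.
    + by split; [rewrite (rv_top Hq)| exact: rv_reduced Hq Hred].
    + by apply: (rv_maximal Hq) => //=; rewrite Et'.
  have Hh : hrel R w f (q, t').
    split=> //; split=> //; right; exists t2; split=> //; split=> //; by exists phi.
  apply: rst_trans (rst_step _ _ _ _ Hh) _.
  apply: IH => //.
  + have := count_neq (proj1 Hm2); rewrite -Hcnt /=; move: Hn; clear; lia.
  + have := (proj1 (Inv Hh)); apply; by exists psi.
Qed.

Lemma P_hyp f : is_edge R w f -> Pe f -> hyperplane R w e f.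
Proof.
move=> Hf Hp; split=> //.
apply: rst_trans (Chain He Pe_e) (rst_sym _ _ _ _ (Chain Hf Hp)).
Qed.


Lemma emb_Pe f : is_edge R w f -> forall D psi, dclosed f.1 D -> restr_via R f.1 D Dl psi -> D f.2 -> Pe f.
Proof.
move=> Hf D psi Hd Hr Df.
have [[Hwf _] Hm] := Hf.
have f2p : f.2 < ntr f.1 by case: Hm.
have [j [jn Ej]] := rv_sur Hr f2p Df.
have Hjm : maximal Dl j by apply: (rv_maximal Hr) => //; rewrite Ej.
have Ejt := max_t0 jn Hjm; subst j.
exists psi; split=> //.
apply: (rv_ext Hwf _ Hr) => i ip; split.
- move=> Di; have [j' [j'n <-]] := rv_sur Hr ip Di.
  rewrite -Ej; apply: (rv_tle Hr); exact: t0_top.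
- case=> [->|Ht] //; exact: dclosed_tlt Hd Ht Df.
Qed.

Local Notation H := (hyperplane R w e).

Lemma step_emb x y : adj_avoid R w H x y -> emb Dl y -> emb Dl x.
Proof.
move=> [_ [_ [E [HE [nH [[[phx Hx] [phy Hy]]|[[phy Hy] [phx Hx]]]]]]]] Hemb.
- have [D [psi [Hd Hr]]] := emb_rv Hy (max_dclosed (proj2 HE)) Hemb.
  by apply: (emb_factor Hx Hd Hr).
- have [D [psi [Hd Hr]]] : emb Dl E.1 by apply: (emb_rv Hy) => //.
  case: (classic (D E.2)) => DE.
  + by case: nH; apply: P_hyp => //; apply: (emb_Pe HE Hd Hr DE).
  + apply: (emb_factor Hx Hd Hr) => i ip Di Ei; subst; exact: DE Di.
Qed.

Lemma pos_of_emb v : is_vertex R w v -> emb Dl v -> pos_half R w H v.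
Proof.
move=> Hv Hemb; split=> // [[s [[_ [_ Hs0]] Hc]]].
suff K : forall x y, clos_refl_trans (picture S) (adj_avoid R w H) x y -> emb Dl y -> emb Dl x.
  have := emb_ntr (K _ _ Hc Hemb) Hs0.
  by move: Ht0 => /[swap] ->.
move=> x y; elim=> [a b /step_emb //|a //|a b c _ IH1 _ IH2 Hc'].
by apply: IH1; apply: IH2.
Qed.

Lemma neg_of_nemb n v : ntr v <= n -> is_vertex R w v -> ~ emb Dl v -> neg_half R w H v.
Proof.
elim: n v => [|n IH] v Hn Hv Hne.
- exists v; split; last exact: rt_refl.
  by have [? [? _]] := Hv; split=> //; split=> //; move: Hn; rewrite leqn0 => /eqP.
- case: (posnP (ntr v)) => Hv0.
    by exists v; split; [have [? [? _]] := Hv; split=> //|exact: rt_refl].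
  have [Hwv [Htop Hred]] := Hv.
  have [T [HT _]] := @exists_max v (fun _ => True) Hwv (fun _ _ _ _ => I) 0 Hv0 I.
  have [q [phi [Hq Hcnt]]] := restr_exists Hwv (max_dclosed HT).
  have Hqv : is_vertex R w q.
    by split; [exact: rv_wf Hq|split; [rewrite (rv_top Hq)|exact: rv_reduced Hq Hred]].
  have Hneq : ~ emb Dl q by move=> Hq'; apply: Hne; exact: emb_rv Hq (max_dclosed HT) Hq'.
  have [s [Hs Hc]] := IH q ltac:(have := count_neq (proj1 HT); rewrite -Hcnt; move: Hn; clear; lia) Hqv Hneq.
  exists s; split=> //; apply: rt_trans Hc (rt_step _ _ _ _ _).
  split=> //; split=> //; exists (v, T); split; first by split.
  split.
  + move=> /Hyp_P [psi [Hr _]]; apply: Hne; exists (fun i => tle v i T), psi; split=> //.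
    exact: tle_dclosed.
  + right; split; [exists (fun x => x); exact: rv_id|by exists phi].
Qed.

Lemma KL v : pos_half R w H v <-> is_vertex R w v /\ emb Dl v.
Proof.
split.
- move=> [Hv Hn]; split=> //; apply: NNPP => Hne; apply: Hn.
  exact: (neg_of_nemb (leqnn _) Hv Hne).
- by move=> [Hv Hemb]; apply: pos_of_emb.
Qed.

End Hyp.

End Proofs.

Lemma min_setup (S : Type) (R : seq S -> seq S -> Prop) (w : seq S) (e : medge S) (Dl : picture S) :
  is_edge R w e -> is_min R e Dl ->
  exists phi0 t0, restr_via R e.1 (fun i => tle e.1 i e.2) Dl phi0 /\ t0 < ntr Dl /\ phi0 t0 = e.2.
Proof.
move=> He [phi Hr]; exists phi.
have f2p : e.2 < ntr e.1 by case: (proj2 He).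
have [t [tn Et]] := rv_sur Hr f2p (or_introl erefl).
by exists t.
Qed.

Theorem proposition4p3 (S : Type) (R : seq S -> seq S -> Prop) (w : seq S)
  (HRneq : forall u v, R u v -> u <> v)
  (HRne : forall u v, R u v -> u <> [::] /\ v <> [::])
  (Hw : w <> [::])
  (e1 e2 : medge S) (He1 : is_edge R w e1) (He2 : is_edge R w e2)
  (D1 D2 : picture S) (HD1 : is_min R e1 D1) (HD2 : is_min R e2 D2) :
  ((forall v, pos_half R w (hyperplane R w e1) v ->
              pos_half R w (hyperplane R w e2) v) <-> le_v R D2 D1) /\
  ((exists v, pos_half R w (hyperplane R w e1) v /\
              pos_half R w (hyperplane R w e2) v) <->
   (exists v, is_vertex R w v /\ le_v R D1 v /\ le_v R D2 v)).
Proof.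
have [phi1 [t1 [Hm1 [Ht1 Et1]]]] := min_setup He1 HD1.
have [phi2 [t2 [Hm2 [Ht2 Et2]]]] := min_setup He2 HD2.
have K1 := KL He1 Hm1 Ht1 Et1.
have K2 := KL He2 Hm2 Ht2 Et2.
have V1 : is_vertex R w D1 by case: (Dl_edge He1 Hm1 Ht1 Et1).
have V2 : is_vertex R w D2 by case: (Dl_edge He2 Hm2 Ht2 Et2).
have W1 : wf R D1 by case: V1.
have W2 : wf R D2 by case: V2.
split; split.
- move=> Hall.
  have P1 : pos_half R w (hyperplane R w e1) D1 by apply/K1; split=> //; exact: emb_refl.
  have [_ E21] := (proj1 (K2 D1)) (Hall _ P1).
  exact: emb_le W2 W1 E21.
- move=> Hle v /K1 [Hv [D [psi [Hd Hr]]]].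
  apply/K2; split=> //.
  exact: emb_rv Hr Hd (le_emb W2 W1 Hle).
- move=> [v [/K1 [Hv E1] /K2 [_ E2]]].
  have Wv : wf R v by case: Hv.
  by exists v; split=> //; split; apply: emb_le.
- move=> [v [Hv [L1 L2]]].
  have Wv : wf R v by case: Hv.
  exists v; split; [apply/K1|apply/K2]; split=> //; exact: le_emb.
Qed.
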